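(* Let $C<\infty$. For each $n$, let $X_1,\dots,X_n$ be independent random variables taking values in $[0,1]$, where each $X_i$ has a continuous density $f_{X_i}$ with $\sup_x f_{X_i}(x)\le C$ ($C$ independent of $n$ and $i$). Let $X_{(1)}\le\dots\le X_{(n)}$ be the order statistics and $T=\min_{1\le i\le n-1}(X_{(i+1)}-X_{(i)})$. Then for every $\eta>0$ and every $x>0$, \[ \Pr\big(n^{2+\eta}T>x\big)\to1\quad(n\to\infty), \] i.e. $n^{2+\eta}T\to\infty$ in probability. *)

(* Defs.v *)
From HB Require Import structures.
From mathcomp Require Import all_boot all_order all_algebra.
From mathcomp Require Import all_classical all_reals all_analysis.
Set Implicit Arguments. Unset Strict Implicit. Unset Printing Implicit Defensive.
Import Order.TTheory GRing.Theory Num.Theory.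
Import numFieldNormedType.Exports.
Local Open Scope classical_set_scope.
Local Open Scope ring_scope.

(* Mutual independence of a finite family of real random variables:
   the product rule holds for every choice of Borel sets (taking B i = setT
   recovers the product rule for every subfamily). *)
Definition mutually_independent {d} {Ω : measurableType d} {R : realType}
  (P : probability Ω R) (n : nat) (X : 'I_n -> Ω -> R) : Prop :=
  forall B : 'I_n -> set R, (forall i, measurable (B i)) ->
    P (\bigcap_(i in [set: 'I_n]) (X i @^-1` B i)) =
    (\prod_(i < n) P (X i @^-1` B i))%E.

Definition is_density {d} {Ω : measurableType d} {R : realType}
  (P : probability Ω R) (X : Ω -> R) (f : R -> R) : Prop :=
  (forall y, 0 <= f y) /\
  forall B : set R, measurable B ->
    P (X @^-1` B) = (\int[lebesgue_measure]_(y in B) (f y)%:E)%E.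

(* Minimum spacing of a sequence of reals:
   sort s increasingly into s_(0) <= ... <= s_(m-1) and return
   min_{i < m-1} (s_(i+1) - s_(i)); by convention 0 if m <= 1. *)
Definition min_spacing {R : realType} (s : seq R) : R :=
  let t := sort <=%R s in
  let sp := [seq nth 0 t i.+1 - nth 0 t i | i <- iota 0 (size t).-1] in
  match sp with
  | [::] => 0
  | h :: tl => foldr Num.min h tl
  end.

Definition T_stat {R : realType} {Ω : Type} (n : nat) (X : 'I_n -> Ω -> R)
  (ω : Ω) : R := min_spacing [seq X i ω | i <- enum 'I_n].

(* Main.v *)
Require Import Defs.
Set Warnings "-all".
From HB Require Import structures.
From mathcomp Require Import all_boot all_order all_algebra.
From mathcomp Require Import all_classical all_reals all_analysis.
From mathcomp Require Import ring lra.
Import Order.TTheory GRing.Theory Num.Theory.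
Import numFieldNormedType.Exports.
Local Open Scope classical_set_scope.
Local Open Scope ring_scope.

Lemma bigU_mem (T : Type) n (F : nat -> set T) w :
  (\big[setU/set0]_(i < n) F i) w <-> exists2 i, (i < n)%N & F i w.
Proof.
rewrite -bigcup_mkord; split => [[i /= hi Fi]|[i hi Fi]]; by exists i.
Qed.

Lemma pairwise_perm_sym (T : eqType) (r : rel T) : symmetric r ->
  forall s t : seq T, perm_eq s t -> pairwise r s -> pairwise r t.
Proof.
move=> rs; elim=> [|x s IH] t.
  by rewrite perm_sym => /perm_nilP ->.
move=> Hp /= /andP[hx hs].
have xt : x \in t by rewrite -(perm_mem Hp) mem_head.
case/splitPr: xt Hp => t1 t2 Hp.
have Hp2 : perm_eq (t1 ++ x :: t2) (x :: t1 ++ t2) by rewrite -cat1s perm_catCA.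
have Hs : perm_eq s (t1 ++ t2).
  by rewrite -(perm_cons x) (perm_trans Hp) // Hp2.
have := IH _ Hs hs; rewrite !pairwise_cat => /and3P[h12 h1 h2].
have hx' : all (r x) (t1 ++ t2) by rewrite -(perm_all _ Hs).
rewrite all_cat in hx'; case/andP: hx' => hx1 hx2.
rewrite h1 /= hx2 h2 !andbT allrel_consr h12 andbT.
by apply/allP => y /(allP hx1); rewrite rs.
Qed.

Lemma lt_foldr_min (R : realType) (t h : R) (tl : seq R) :
  (t < foldr Num.min h tl) = all (fun y => t < y) (h :: tl).
Proof.
elim: tl => [|y tl IH] /=; first by rewrite andbT.
by rewrite lt_min IH /=; bool_congr.
Qed.

Lemma min_spacingP (R : realType) (t : R) (s : seq R) : (1 < size s)%N ->
  (t < min_spacing s) = pairwise (fun u v => t < `|u - v|) s.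
Proof.
move=> hs; rewrite /min_spacing.
set u := sort _ s.
have su : sorted <=%R u by apply: sort_sorted; exact: le_total.
have pu : perm_eq u s by rewrite perm_sort.
have szu : size u = size s by rewrite size_sort.
have rsym : symmetric (fun u v : R => t < `|u - v|) by move=> a b; rewrite distrC.
transitivity (pairwise (fun u v => t < `|u - v|) u); last first.
  by apply/idP/idP; apply: pairwise_perm_sym => //; rewrite perm_sym.
have -> : (t < match [seq nth 0 u i.+1 - nth 0 u i | i <- iota 0 (size u).-1] with
         | [::] => 0 | h :: tl => foldr Num.min h tl end) =
    all (fun i => t < nth 0 u i.+1 - nth 0 u i) (iota 0 (size u).-1).
  move: hs; rewrite -szu; case: (size u) => [|[|k]] // _ /=.
  by rewrite lt_foldr_min /= all_map.
apply/allP/(@pairwiseP _ (fun u v : R => t < `|u - v|) 0 u) => [H i j iu ju ij | H i].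
  rewrite !inE /= in iu ju.
  have hi : i \in iota 0 (size u).-1.
    rewrite mem_iota add0n /=; move: ju; case: (size u) => // k /=.
    by rewrite ltnS => ju'; exact: leq_trans ij ju'.
  have := H i hi => /= Hi.
  rewrite distrC ger0_norm ?subr_ge0; last first.
    by apply: (sorted_leq_nth le_trans le_refl 0 su) => //; rewrite ?inE // ltnW.
  apply: (lt_le_trans Hi); rewrite lerD2r.
  by apply: (sorted_leq_nth le_trans le_refl 0 su); rewrite ?inE //= (leq_ltn_trans ij ju).
rewrite mem_iota add0n => /andP[_ hi].
have hi1 : (i.+1 < size u)%N by rewrite -ltn_predRL.
have := H i i.+1 (ltnW hi1) hi1 (ltnSn i).
rewrite distrC ger0_norm // subr_ge0.
by apply: (sorted_leq_nth le_trans le_refl 0 su) => //; rewrite inE ltnW.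
Qed.

Lemma T_statP (R : realType) (Ω : Type) n (X : 'I_n -> Ω -> R) ω (t : R) :
  (1 < n)%N ->
  (t < T_stat X ω) <-> (forall a b : 'I_n, (a < b)%N -> t < `|X a ω - X b ω|).
Proof.
move=> n1; rewrite /T_stat min_spacingP; last by rewrite size_map; first [rewrite size_enum_ord | rewrite -cardE card_ord | rewrite -cardT card_ord | rewrite unlock size_enum_ord ].
rewrite pairwise_map.
have x0 : 'I_n by exists 0%N; apply: ltn_trans n1.
split.
  move/(pairwiseP x0) => H a b ab.
  have := H a b; rewrite !inE /= size_enum_ord => /(_ (ltn_ord a) (ltn_ord b) ab).
  have ea : nth x0 (enum 'I_n) a = a by apply: val_inj; rewrite /= nth_enum_ord.
  have eb : nth x0 (enum 'I_n) b = b by apply: val_inj; rewrite /= nth_enum_ord.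
  by rewrite ea eb.
move=> H; apply/(pairwiseP x0) => i j; rewrite !inE /= size_enum_ord => hi hj ij.
apply: H; rewrite !nth_enum_ord //.
Qed.

Lemma inv_powR_cvg0 (R : realType) (eta : R) : 0 < eta ->
  (fun n : nat => (n%:R `^ eta)^-1) @ \oo --> (0 : R).
Proof.
move=> eta0; apply/cvgr0Pnorm_lt => e e0.
set y := (e^-1) `^ (eta^-1).
exists (Num.truncn y).+1 => // n /= hn.
have y0 : 0 <= y by apply: powR_ge0.
have yn : y < n%:R.
  apply: lt_le_trans (truncnS_gt y) _; rewrite ler_nat //.
have n0 : 0 < n%:R :> R by apply: le_lt_trans yn.
have hy : y `^ eta = e^-1.
  by rewrite /y -powRrM mulVf ?gt_eqF // powRr1 // ltW // invr_gt0.
have hlt : e^-1 < n%:R `^ eta.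
  by rewrite -hy; apply: gt0_ltr_powR => //; rewrite nnegrE ltW.
rewrite ger0_norm; last by rewrite invr_ge0 powR_ge0.
rewrite -[e]invrK ltf_pV2 ?posrE ?invr_gt0 ?powR_gt0 //.
Qed.

Lemma real_bound (R : realType) (C x t Nn n e : R) (M : nat) :
  0 < t -> t <= 1 -> M%:R <= t^-1 -> Nn = n ^+ 2 * e -> t = x / Nn ->
  0 < e -> 0 < n -> 0 < x ->
  n ^+ 2 * (M.+1%:R * ((C * t) * (C * (3 * t)))) <= 6 * C ^+ 2 * x * e^-1.
Proof.
move=> t0 t1 hM hN ht e0 n0 x0.
have hM2 : M.+1%:R <= 2 * t^-1.
  have : 1 <= t^-1 by rewrite -[1]invr1 lef_pV2 // posrE.
  rewrite -natr1; lra.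
have h3 : 0 <= (C * t) * (C * (3 * t)).
  have -> : (C * t) * (C * (3 * t)) = 3 * (C * t) ^+ 2 by ring.
  by rewrite mulr_ge0 // sqr_ge0.
apply: le_trans (_ : n ^+ 2 * (2 * t^-1 * ((C * t) * (C * (3 * t)))) <= _).
  by rewrite ler_wpM2l ?sqr_ge0 // ler_wpM2r.
rewrite le_eqVlt; apply/orP; left; apply/eqP.
rewrite ht hN; field.
by rewrite !gt_eqF // ?expf_neq0 // gt_eqF.
Qed.
Local Open Scope ring_scope.

Lemma ge0_le_integral_nm d (T : measurableType d) (R : realType)
  (mu : {measure set T -> \bar R}) (D : set T) (f1 f2 : T -> \bar R) :
  (forall x, D x -> (0 <= f1 x)%E) -> (forall x, D x -> (f1 x <= f2 x)%E) ->
  (\int[mu]_(x in D) f1 x <= \int[mu]_(x in D) f2 x)%E.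
Proof.
move=> h0 h12.
rewrite ge0_integralE // [X in (_ <= X)%E]ge0_integralE //; last first.
  by move=> x Dx; apply: le_trans (h0 x Dx) (h12 x Dx).
apply: ereal_sup_le => _ [h hf <-]; exists h => //= x.
apply: le_trans (hf x) _; rewrite /patch; case: ifP => // /set_mem Dx.
exact: h12.
Qed.

Lemma dens_bound d (Ω : measurableType d) (R : realType) (P : probability Ω R)
  (Y : Ω -> R) (f : R -> R) (C : R) :
  is_density P Y f -> (forall y, f y <= C) ->
  forall B : set R, measurable B -> (P (Y @^-1` B) <= C%:E * lebesgue_measure B)%E.
Proof.
move=> [f0 hd] hC B mB; rewrite hd //.
rewrite -(integral_cst lebesgue_measure mB).
apply: ge0_le_integral_nm => x _; rewrite ?lee_fin //.
Qed.

Lemma indep_pair d (Ω : measurableType d) (R : realType) (P : probability Ω R)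
  (n : nat) (X : 'I_n -> Ω -> R) : mutually_independent P X ->
  forall (i j : 'I_n) (A B : set R), i != j -> measurable A -> measurable B ->
  P (X i @^-1` A `&` X j @^-1` B) = (P (X i @^-1` A) * P (X j @^-1` B))%E.
Proof.
move=> hind i j A B ij mA mB.
pose Bf k := if k == i then A else if k == j then B else setT.
have mBf k : measurable (Bf k) by rewrite /Bf; case: ifP => //; case: ifP.
have := hind Bf mBf.
have -> : \bigcap_(k in [set: 'I_n]) (X k @^-1` Bf k) = X i @^-1` A `&` X j @^-1` B.
  apply/seteqP; split => w.
    move=> H; split.
      by have := H i I; rewrite /Bf eqxx.
    have ji : (j == i) = false by rewrite eq_sym (negbTE ij).
    by have := H j I; rewrite /Bf ji eqxx.
  move=> [Ha Hb] k _; rewrite /Bf; case: eqP => [->//|_]; case: eqP => [->//|//].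
move=> ->.
rewrite (bigD1 i) //= (bigD1 j) /=; last by rewrite eq_sym.
rewrite big1 ?mule1.
  by rewrite /Bf eqxx eq_sym (negbTE ij) eqxx.
move=> k /andP[ki kj]; rewrite /Bf (negbTE ki) (negbTE kj) preimage_setT.
exact: probability_setT.
Qed.

Lemma mE_dist d (Ω : measurableType d) (R : realType) (Y Z : Ω -> R) (t : R) :
  measurable_fun setT Y -> measurable_fun setT Z ->
  measurable [set w | `|Y w - Z w| <= t].
Proof.
move=> mY mZ.
have mf : measurable_fun setT (fun w => `|Y w - Z w|).
  apply: measurableT_comp; [exact: measurable_realfun.normr_measurable | exact: measurable_realfun.measurable_funB].
have -> : [set w | `|Y w - Z w| <= t] = (fun w => `|Y w - Z w|) @^-1` `]-oo, t].
  by apply/seteqP; split => w /=; rewrite in_itv.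
by rewrite -[X in measurable X]setTI; exact: mf.
Qed.

Lemma pair_bound d (Ω : measurableType d) (R : realType) (P : probability Ω R)
  (n : nat) (X : 'I_n -> Ω -> R) (C t : R) (i j : 'I_n) (fi fj : R -> R) :
  mutually_independent P X -> i != j ->
  measurable_fun setT (X i) -> measurable_fun setT (X j) ->
  (forall w, 0 <= X i w <= 1) ->
  is_density P (X i) fi -> is_density P (X j) fj ->
  (forall y, fi y <= C) -> (forall y, fj y <= C) -> 0 < t ->
  (P [set w | (`|X i w - X j w| <= t)%R] <=
    ((Num.truncn t^-1).+1%:R * ((C * t) * (C * (3 * t))))%:E)%E.
Proof.
move=> hind ij mi mj hr di dj hCi hCj t0.
have C0 : 0 <= C by apply: le_trans (hCi 0); case: di => h _; exact: h.
set M := Num.truncn t^-1.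
pose I (k : nat) := `[k%:R * t, k.+1%:R * t[%classic.
pose J (k : nat) := `[(k%:R - 1) * t, (k%:R + 2) * t]%classic.
pose G k := X i @^-1` (I k) `&` X j @^-1` (J k).
have mpre (Y : Ω -> R) B : measurable_fun setT Y -> measurable B -> measurable (Y @^-1` B).
  by move=> mY mB; have := mY measurableT B mB; rewrite setTI.
have mG k : measurable (G k) by apply: measurableI; apply: mpre => //; exact: measurable_itv.
have sub : [set w | `|X i w - X j w| <= t] `<=` \big[setU/set0]_(k < M.+1) G k.
  move=> w /= hw; rewrite -bigcup_mkord.
  have /andP[u0 u1] := hr w.
  set u := X i w in hw u0 u1 *; set v := X j w in hw *.
  have ut0 : 0 <= u / t by rewrite divr_ge0 // ltW.
  have /andP[kl ku] := truncn_itv ut0.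
  exists (Num.truncn (u / t)).
    rewrite /= ltnS; apply: le_truncn; by rewrite -[leRHS]mul1r ler_pM2r ?invr_gt0.
  have [hv1 hv2] : u - t <= v /\ v <= u + t.
    by move: hw; rewrite ler_norml; move=> /andP[]; split; lra.
  rewrite ler_pdivlMr // in kl; rewrite ltr_pdivrMr // in ku.
  split; rewrite /preimage /I /J /= in_itv /=.
    by rewrite kl ku.
  rewrite -natr1 mulrDl mul1r in ku.
  by apply/andP; split; rewrite ?mulrBl ?mulrDl ?mul1r -/v; lra.
have mEij : measurable [set w | (`|X i w - X j w| <= t)%R] by exact: mE_dist.
apply: le_trans (le_measure _ _ _ sub) _; rewrite ?inE //.
  by apply: bigsetU_measurable => k _.
apply: le_trans (Boole_inequality _ _) _; first by move=> k _.
have lamI k : lebesgue_measure (I k) = t%:E.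
  rewrite /I lebesgue_measure_itv /= lte_fin ltr_pM2r // ltr_nat ltnSn.
  by rewrite -EFinB -natr1 mulrDl mul1r addrAC subrr add0r.
have lamJ k : lebesgue_measure (J k) = (3 * t)%:E.
  rewrite /J lebesgue_measure_itv /= lte_fin ltr_pM2r // ifT; last lra.
  by rewrite -EFinB; congr EFin; ring.
have HG k : (P (G k) <= ((C * t) * (C * (3 * t)))%:E)%E.
  rewrite /G indep_pair //; try exact: measurable_itv.
  rewrite EFinM; apply: lee_pmul => //.
  - rewrite EFinM -(lamI k); exact: (@dens_bound _ _ _ P _ _ C di hCi _ (measurable_itv _)).
  - rewrite EFinM -(lamJ k); exact: (@dens_bound _ _ _ P _ _ C dj hCj _ (measurable_itv _)).
have -> : (M.+1%:R * ((C * t) * (C * (3 * t))))%:E = (\sum_(k < M.+1) ((C * t) * (C * (3 * t)))%:E)%E.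
  by rewrite sumEFin sumr_const card_ord mulr_natl.
by apply: lee_sum => k _; exact: HG.
Qed.

Lemma main_bound d (Ω : measurableType d) (R : realType) (P : probability Ω R)
  (m : nat) (X : 'I_m.+2 -> Ω -> R) (C eta x : R) :
  (forall i, measurable_fun setT (X i)) ->
  mutually_independent P X ->
  (forall i ω, 0 <= X i ω <= 1) ->
  (forall i, exists f : R -> R, is_density P (X i) f /\
      {within `[0, 1], continuous f} /\ (forall y, f y <= C)) ->
  0 < eta -> 0 < x -> x < m.+2%:R ->
  ((1 - 6 * C ^+ 2 * x * (m.+2%:R `^ eta)^-1)%R%:E <=
     P [set ω | (x < m.+2%:R `^ (2 + eta) * T_stat X ω)%R] <= 1)%E.
Proof.
move=> hmeas hind hrange hdens eta0 x0 xn.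
set n := m.+2%:R.
have n0 : 0 < n by rewrite /n ltr0n.
have n1 : 1 <= n by rewrite /n ler1n.
set Nn := n `^ (2 + eta).
have e0 : 0 < n `^ eta by apply: powR_gt0.
have hNn : Nn = n ^+ 2 * n `^ eta.
  have h2 : n `^ 2 = n ^+ 2 := powR_mulrn 2 (ltW n0).
  rewrite /Nn powRD; first by rewrite h2.
  by apply/implyP => _; rewrite gt_eqF.
have Nn0 : 0 < Nn by apply: powR_gt0.
set t := x / Nn.
have t0 : 0 < t by rewrite divr_gt0.
have t1 : t <= 1.
  rewrite ler_pdivrMr // mul1r hNn.
  have : 1 <= n `^ eta.
    by rewrite -(powRr0 n); apply: ler_powR => //; exact: ltW.
  have : n <= n ^+ 2 by rewrite expr2 ler_peMl.
  nra.
pose Ep (a b : nat) : set Ω := if (a < b)%N then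
  [set w | `|X (inord a) w - X (inord b) w| <= t] else set0.
pose U := \big[setU/set0]_(a < m.+2) \big[setU/set0]_(b < m.+2) Ep a b.
have mEp a b : measurable (Ep a b).
  by rewrite /Ep; case: ifP => // _; apply: mE_dist.
have mU1 a : measurable (\big[setU/set0]_(b < m.+2) Ep a b).
  by apply: bigsetU_measurable => b _.
have mU : measurable U by apply: bigsetU_measurable => a _.
have hA : [set ω | x < Nn * T_stat X ω] = ~` U.
  apply/seteqP; split => w /=.
    rewrite mulrC -ltr_pdivrMr // -/t => /T_statP => /(_ isT) H.
    rewrite /U => /(bigU_mem _ _ (fun a => \big[setU/set0]_(b < m.+2) Ep a b)) [a ha].
    move=> /(bigU_mem _ _ (fun b => Ep a b)) [b hb].
    rewrite /Ep; case: ifP => // ab /=.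
    have := H (inord a) (inord b); rewrite !inordK //.
    by move=> /(_ ab) /lt_geF ->.
  move=> H; rewrite mulrC -ltr_pdivrMr // -/t; apply/T_statP => // a b ab.
  rewrite ltNge; apply/negP => hle; apply: H.
  rewrite /U; apply/(bigU_mem _ _ (fun a => \big[setU/set0]_(b < m.+2) Ep a b)).
  exists a => //; apply/(bigU_mem _ _ (fun b => Ep a b)); exists b => //.
  by rewrite /Ep ab /= !inord_val.
rewrite hA probability_setC //.
have C0 : 0 <= C.
  have [f [[f0 _] [_ hC]]] := hdens ord0; exact: le_trans (f0 0) (hC 0).
set M := Num.truncn t^-1.
set K := M.+1%:R * ((C * t) * (C * (3 * t))).
have K0 : 0 <= K.
  rewrite /K mulr_ge0 //; have -> : (C * t) * (C * (3 * t)) = 3 * (C * t) ^+ 2 by ring.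
  by rewrite mulr_ge0 // sqr_ge0.
have hE a b : (b < m.+2)%N -> (P (Ep a b) <= K%:E)%E.
  move=> hb; rewrite /Ep; case: ifP => ab; last by rewrite measure0 lee_fin.
  have ha : (a < m.+2)%N by apply: ltn_trans ab hb.
  have [fi [di [_ hCi]]] := hdens (inord a).
  have [fj [dj [_ hCj]]] := hdens (inord b).
  apply: (pair_bound _ _ _ P _ X C t (inord a) (inord b) fi fj) => //.
  apply/eqP => /(congr1 val) /=; rewrite !inordK // => eab.
  by rewrite eab ltnn in ab.
have hrow a : (P (\big[setU/set0]_(b < m.+2) Ep a b) <= (m.+2%:R * K)%:E)%E.
  apply: le_trans (Boole_inequality P (fun b _ => mEp a b)) _.
  have -> : (m.+2%:R * K)%:E = (\sum_(b < m.+2) K%:E)%E.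
    by rewrite sumEFin sumr_const card_ord mulr_natl.
  by apply: lee_sum => b _; apply: hE.
have PUb : (P U <= (n ^+ 2 * K)%:E)%E.
  apply: le_trans (Boole_inequality P (fun a _ => mU1 a)) _.
  have -> : (n ^+ 2 * K)%:E = (\sum_(a < m.+2) (m.+2%:R * K)%:E)%E.
    rewrite sumEFin; congr EFin; rewrite sumr_const card_ord -mulr_natr -/n; ring.
  by apply: lee_sum => a _; apply: hrow.
have RB : n ^+ 2 * K <= 6 * C ^+ 2 * x * (n `^ eta)^-1.
  apply: (@real_bound R C x t Nn n (n `^ eta) M) => //.
  by rewrite /M truncn_le invr_ge0 ltW.
have hge : (0 <= P U)%E by apply: measure_ge0.
move: PUb hge (probability_le1 P mU).
case: (P U) => [r| |] //= hr r0 r1.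
rewrite -EFinB !lee_fin in hr r0 *; apply/andP; split.
  by rewrite lerD2l lerN2; exact: le_trans hr RB.
have r0' : 0 <= r by move: r0; rewrite ?lee_fin.
lra.
Qed.

Theorem lemma7 (R : realType) (C : R) (d : measure_display)
  (Ω : nat -> measurableType d) (P : forall n, probability (Ω n) R)
  (X : forall n, 'I_n -> Ω n -> R)
  (hmeas : forall n (i : 'I_n), measurable_fun setT (X n i))
  (hind : forall n, mutually_independent (P n) (X n))
  (hrange : forall n (i : 'I_n) (ω : Ω n), 0 <= X n i ω <= 1)
  (hdens : forall n (i : 'I_n), exists f : R -> R,
      is_density (P n) (X n i) f /\
      {within `[0, 1], continuous f} /\
      (forall y, f y <= C)) :
  forall (eta x : R), 0 < eta -> 0 < x ->
    (fun n => P n [set ω | x < (n%:R) `^ (2 + eta) * T_stat (X n) ω])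
      @ \oo --> 1%E.
Proof.
move=> eta x eta0 x0.
pose b (n : nat) := 6 * C ^+ 2 * x * (n%:R `^ eta)^-1.
have hb : b @ \oo --> (0 : R).
  have := cvgM (cvg_cst (6 * C ^+ 2 * x)) (@inv_powR_cvg0 R eta eta0).
  by rewrite mulr0 => H; apply: H.
apply: (@squeeze_cvge _ _ _ _ (fun n => (1 - b n)%:E) _ (fun=> 1%E)).
- exists (maxn 2 (Num.truncn x).+1) => // n /= hn.
  have n2 : (2 <= n)%N by apply: leq_trans hn; rewrite leq_maxl.
  case: n hn n2 => [|[|m]] // hn _.
  move: hn; rewrite geq_max => /andP[_ hm].
  apply: (main_bound _ _ _ (P m.+2) m (X m.+2) C eta x) => //.
  apply: lt_le_trans (truncnS_gt x) _; rewrite ler_nat //.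
- apply/fine_cvgP; split; first by exists 0%N.
  rewrite /comp /=; rewrite -[X in _ --> X]subr0; apply: cvgB => //; exact: cvg_cst.
- exact: cvg_cst.
Qed.
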